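(* Let $\beta\in[\tfrac12,1)$. If $\lambda$ is an eigenvalue of $\Delta_\beta$, then $\lambda$ is not a principal eigenvalue; that is, $\Delta_\beta$ has no principal eigenvalue.
   Context: Tree: for an integer $m\ge2$, the regular $m$-branching tree $\mathbb{T}_m$ has as vertices the root $\emptyset$ and all finite sequences $(\emptyset,a_1,\dots,a_k)$, $k\in\mathbb{N}$, $a_i\in\{0,\dots,m-1\}$. The level of $x=(\emptyset,a_1,\dots,a_k)$ is $|x|=k$ ($|\emptyset|=0$). The successors of $x$ are $(x,i)$; for $x\ne\emptyset$, $\hat x$ denotes its immediate predecessor. A branch is an infinite sequence $(x_n)_{n\ge0}$ with $x_0=\emptyset$ and $x_{n+1}$ a successor of $x_n$; $\partial\mathbb{T}_m$ is the set of branches. For $y=(x_n)\in\partial\mathbb{T}_m$, $\lim_{x\to y}u(x)=L$ means $\lim_{n\to\infty}u(x_n)=L$. Operator: for $\beta\in[0,1)$ let $p_\beta=1$ if $\beta=0$ and $p_\beta=\beta/(1-\beta)$ if $\beta\in(0,1)$. $\Delta_\beta u(\emptyset)=\frac1m\sum_{i=0}^{m-1}u(\emptyset,i)-u(\emptyset)$ and, for $x\ne\emptyset$, $\Delta_\beta u(x)=\big(\beta u(\hat x)+\frac{1-\beta}{m}\sum_{i=0}^{m-1}u(x,i)-u(x)\big)p_\beta^{-|x|}$. Eigenvalues: $\lambda\in\mathbb{R}$ is an eigenvalue of $\Delta_\beta$ if there is a bounded $u:\mathbb{T}_m\to\mathbb{R}$, $u\not\equiv0$, with $-\Delta_\beta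 u=\lambda u$ on $\mathbb{T}_m$ and $\lim_{x\to y}u(x)=0$ for every $y\in\partial\mathbb{T}_m$. An eigenvalue $\lambda>0$ is principal if it has a non-negative eigenfunction. *)

(* Defs.v *)
From HB Require Import structures.
From mathcomp Require Import all_boot all_order all_algebra.
From mathcomp Require Import all_classical all_reals topology normedtype sequences.

Import Order.TTheory GRing.Theory Num.Theory.
Import numFieldNormedType.Exports.
Local Open Scope classical_set_scope.
Local Open Scope ring_scope.

(* Vertices of the m-branching tree T_m: the vertex (root, a_1, ..., a_k) is
   encoded by the REVERSED list [:: a_k; ...; a_1] of digits in 'I_m.
   Root = [::]; successor (x,i) = i :: x; predecessor of x <> root = behead x;
   level |x| = size x. *)
Definition vertex (m : nat) := seq 'I_m.

(* Branches are in bijection with infinite digit sequences b : nat -> 'I_m;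
   the n-th vertex of the branch is (root, b 0, ..., b (n-1)). *)
Fixpoint branch_vertex {m : nat} (b : nat -> 'I_m) (n : nat) : vertex m :=
  match n with
  | 0 => [::]
  | n'.+1 => b n' :: branch_vertex b n'
  end.

Definition pbeta {R : realType} (beta : R) : R :=
  if beta == 0 then 1 else beta / (1 - beta).

Definition Delta_beta {R : realType} {m : nat} (beta : R)
  (u : vertex m -> R) (x : vertex m) : R :=
  match x with
  | [::] => (m%:R)^-1 * (\sum_(i < m) u [:: i]) - u [::]
  | _ :: xh => (beta * u xh + (1 - beta) / m%:R * (\sum_(i < m) u (i :: x)) - u x)
               * ((pbeta beta) ^+ size x)^-1
  end.

Definition eigenfunction {R : realType} (m : nat) (beta lam : R)
  (u : vertex m -> R) : Prop :=
  (exists M : R, forall x, `|u x| <= M) /\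
  (exists x, u x != 0) /\
  (forall x, - Delta_beta beta u x = lam * u x) /\
  (forall b : nat -> 'I_m, (fun n => u (branch_vertex b n)) @ \oo --> (0 : R)).

Definition is_eigenvalue {R : realType} (m : nat) (beta lam : R) : Prop :=
  exists u : vertex m -> R, eigenfunction m beta lam u.

Definition is_principal_eigenvalue {R : realType} (m : nat) (beta lam : R) : Prop :=
  0 < lam /\
  exists u : vertex m -> R, eigenfunction m beta lam u /\ (forall x, 0 <= u x).

(* Main.v *)
Require Import Defs.
From HB Require Import structures.
From mathcomp Require Import all_boot all_order all_algebra.
From mathcomp Require Import all_classical all_reals topology normedtype sequences.
From mathcomp Require Import ring lra.
Import Order.TTheory GRing.Theory Num.Theory.
Local Open Scope ring_scope.

Lemma child_le_avg (R : realType) (m : nat) (hm : (0 < m)%N) (f : 'I_m -> R) :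
  exists j, f j <= (m%:R)^-1 * \sum_(i < m) f i.
Proof.
case: (pselect (exists j, f j <= (m%:R)^-1 * \sum_(i < m) f i)) => // H.
exfalso.
have H' : forall j, (m%:R)^-1 * \sum_(i < m) f i < f j.
  move=> j; rewrite ltNge; apply/negP => Hj; apply: H; by exists j.
have := @ltr_sum R 'I_m (index_enum 'I_m) xpredT
  (fun _ => (m%:R)^-1 * \sum_(i < m) f i) f.
have hne : has xpredT (index_enum 'I_m).
  apply/hasP; exists (Ordinal hm) => //; by rewrite mem_index_enum.
move=> /(_ hne (fun j _ => H' j)).
rewrite sumr_const card_ord -[X in X < _]mulr_natl mulrA mulfV ?mul1r ?ltxx //.
by rewrite pnatr_eq0 -lt0n.
Qed.

Section S.
Variables (R : realType) (m : nat) (hm : (0 < m)%N) (beta : R)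
  (hb0 : 0 < beta) (hb1 : beta < 1) (lam : R) (u : vertex m -> R)
  (hu : forall x, 0 <= u x)
  (he : forall x, - Delta_beta beta u x = lam * u x).

Lemma pbeta_gt0 : 0 < pbeta beta.
Proof.
rewrite /pbeta gt_eqF //; apply: divr_gt0 => //; by rewrite subr_gt0.
Qed.

Lemma eq_node i xh :
  beta * u xh + (1 - beta) / m%:R * (\sum_(j < m) u (j :: i :: xh))
  = (1 - lam * pbeta beta ^+ (size xh).+1) * u (i :: xh).
Proof.
have := he (i :: xh); rewrite /Delta_beta /=.
set E := (X in (X * _)).
set P := pbeta beta ^+ _.
have hP : P != 0 by rewrite expf_neq0 // gt_eqF // pbeta_gt0.
move=> h.
have hE : E = - (lam * u (i :: xh)) * P.
  by rewrite -h opprK mulfVK.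
move: hE; rewrite /E => hE.
have -> : beta * u xh + (1 - beta) / m%:R * (\sum_(j < m) u (j :: i :: xh))
   = (beta * u xh + (1 - beta) / m%:R * (\sum_(j < m) u (j :: i :: xh)) - u (i :: xh)) + u (i :: xh) by rewrite subrK.
rewrite hE; ring.
Qed.

Lemma eq_root : (m%:R)^-1 * (\sum_(i < m) u [:: i]) = (1 - lam) * u [::].
Proof.
have := he [::]; rewrite /Delta_beta => h.
have -> : (m%:R)^-1 * (\sum_(i < m) u [:: i]) = ((m%:R)^-1 * (\sum_(i < m) u [:: i]) - u [::]) + u [::] by rewrite subrK.
rewrite -(opprK (_ - _)) h; ring.
Qed.

Lemma avg_ge0 (f : 'I_m -> R) : (forall i, 0 <= f i) -> 0 <= \sum_(i < m) f i.
Proof. by move=> H; apply: sumr_ge0 => i _. Qed.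

Lemma zero_prop i xh : u (i :: xh) = 0 -> u xh = 0 /\ forall j, u (j :: i :: xh) = 0.
Proof.
move=> h0; have := eq_node i xh; rewrite h0 mulr0 => h.
have hS := avg_ge0 (fun j => u (j :: i :: xh)) (fun j => hu _).
have hm' : 0 < (1 - beta) / m%:R.
  apply: divr_gt0; first by rewrite subr_gt0.
  by rewrite ltr0n.
have h1 : 0 <= beta * u xh by apply: mulr_ge0; [apply: ltW|].
have h2 : 0 <= (1 - beta) / m%:R * (\sum_(j < m) u (j :: i :: xh)).
  by apply: mulr_ge0 => //; apply: ltW.
have e1 : beta * u xh = 0 by apply/eqP; rewrite eq_le h1 andbT; lra.
have e2 : (1 - beta) / m%:R * (\sum_(j < m) u (j :: i :: xh)) = 0.
  by apply/eqP; rewrite eq_le h2 andbT; lra.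
split.
  by move/eqP: e1; rewrite mulf_eq0 gt_eqF //= => /eqP.
move/eqP: e2; rewrite mulf_eq0 gt_eqF //= => /eqP e2.
move=> j; by apply: (psumr_eq0P _ e2) => // k _.
Qed.

Lemma zero_root : u [::] = 0 -> forall j, u [:: j] = 0.
Proof.
move=> h0; have := eq_root; rewrite h0 mulr0 => /eqP.
rewrite mulf_eq0 invr_eq0 pnatr_eq0.
have -> : (m == 0)%N = false by case: m hm.
move=> /= /eqP e.
move=> j; by apply: (psumr_eq0P _ e) => // k _.
Qed.

Lemma all_pos : (exists x, u x != 0) -> forall x, 0 < u x.
Proof.
move=> [x0 hx0] x; rewrite lt_def hu andbT.
apply/negP => /eqP hx.
have hr : forall y, u y = 0 -> u [::] = 0.
  elim=> [//|i y IH] /zero_prop [] /IH //.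
have hall : forall y, u y = 0.
  elim=> [|j y IH]; first by apply: hr hx.
  case: y IH => [|i xh] IH; first by apply: zero_root.
  by have [_ ->] := zero_prop _ _ IH.
by move: hx0; rewrite hall eqxx.
Qed.


Hypothesis hlam : 0 < lam.
Hypothesis hpos : forall x, 0 < u x.

Lemma case_gt : 2^-1 < beta -> False.
Proof.
move=> hbh.
have hp : 1 < pbeta beta.
  rewrite /pbeta gt_eqF // ltr_pdivlMr ?subr_gt0 //; lra.
set p := pbeta beta in hp.
have bern : forall n, 1 + n%:R * (p - 1) <= p ^+ n.
  elim=> [|n IH]; first by rewrite expr0 mul0r addr0.
  rewrite exprS -addn1 natrD.
  have h0 : 0 <= n%:R * (p - 1) by apply: mulr_ge0; [apply: ler0n| lra].
  nra.
have hk0 : 0 <= (lam * (p - 1))^-1.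
  rewrite invr_ge0; apply: mulr_ge0. exact: ltW. lra.
have [k hk] : exists k : nat, (lam * (p - 1))^-1 < k%:R.
  by exists (Num.Def.archi_bound ((lam * (p - 1))^-1)); exact: archi_boundP.
have hk' : 1 < lam * (p - 1) * k%:R.
  have hq : 0 < lam * (p - 1) by apply: mulr_gt0 => //; lra.
  by rewrite -(ltr_pM2l hq) mulfV ?gt_eqF in hk.
pose o := Ordinal hm.
have := eq_node o (nseq k o); rewrite size_nseq.
have hb := bern k.+1; rewrite mulrSr in hb.
have hu1 := hpos (o :: nseq k o).
have hu2 := hpos (nseq k o).
have hS := avg_ge0 (fun j => u (j :: o :: nseq k o)) (fun j => ltW (hpos _)).
have hm' : 0 <= (1 - beta) / m%:R.
  apply: divr_ge0. rewrite subr_ge0; exact: ltW. apply: ler0n.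
have h2 : 0 <= (1 - beta) / m%:R * (\sum_(j < m) u (j :: o :: nseq k o)).
  exact: mulr_ge0.
have h3 : 1 <= lam * p ^+ k.+1.
  have : lam * (p - 1) * k%:R <= lam * p ^+ k.+1.
    have h4 : (k%:R) * (p - 1) <= p ^+ k.+1 by lra.
    by rewrite -mulrA ler_pM2l // mulrC.
  lra.
have h5 : 0 < beta * u (nseq k o) by apply: mulr_gt0.
move=> e.
have : (1 - lam * p ^+ k.+1) * u (o :: nseq k o) <= 0.
  apply: mulr_le0_ge0; [lra | exact: ltW].
lra.
Qed.

Lemma case_half : beta = 2^-1 -> False.
Proof.
move=> hbe.
have hp : pbeta beta = 1.
  rewrite /pbeta gt_eqF // hbe.
  have -> : 1 - 2^-1 = 2^-1 :> R by field.
  by rewrite divff // invr_eq0 pnatr_eq0.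
have step : forall i xh, exists j,
   u (j :: i :: xh) <= 2 * (1 - lam) * u (i :: xh) - u xh.
  move=> i xh.
  have [j hj] := child_le_avg R m hm (fun j => u (j :: i :: xh)).
  exists j.
  have := eq_node i xh; rewrite hp expr1n mulr1 hbe => e.
  have e' : (m%:R)^-1 * (\sum_(j < m) u [:: j, i & xh]) = 2 * (1 - lam) * u (i :: xh) - u xh.
    move: e; rewrite -mulrA; lra.
  by rewrite -e'.
have claim : forall n : nat, exists i xh,
    u (i :: xh) <= (1 - lam - 2 * lam * n%:R) * u xh.
  elim=> [|n [i [xh IH]]].
    have [j hj] := child_le_avg R m hm (fun j => u [:: j]).
    exists j, [::]; rewrite mulr0 subr0 -eq_root //.
  have [j hj] := step i xh.
  exists j, (i :: xh).
  set t := 1 - lam - 2 * lam * n%:R in IH.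
  have -> : 1 - lam - 2 * lam * (n.+1)%:R = t - 2 * lam.
    by rewrite /t mulrSr; ring.
  have ha := hpos (i :: xh).
  have hb := hpos xh.
  have ht : 0 < t.
    rewrite ltNge; apply/negP => ht.
    have : t * u xh <= 0 by apply: mulr_le0_ge0 => //; exact: ltW.
    lra.
  have key : (2 - t) * u (i :: xh) <= u xh.
    have h1 : 0 <= t * u xh - u (i :: xh) by lra.
    have h2 : 0 <= u (i :: xh) * (1 - t) ^+ 2 by apply: mulr_ge0; [exact: ltW| exact: sqr_ge0].
    have : 0 <= t * (u xh - (2 - t) * u (i :: xh)).
      have -> : t * (u xh - (2 - t) * u (i :: xh)) = (t * u xh - u (i :: xh)) + u (i :: xh) * (1 - t) ^+ 2 by ring.
      exact: addr_ge0.
    rewrite pmulr_rge0 //; lra.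
  lra.
have [n hn] : exists n : nat, lam^-1 < n%:R.
  exists (Num.Def.archi_bound (lam^-1)); apply: archi_boundP.
  by rewrite invr_ge0; apply: ltW.
have [i [xh h]] := claim n.
have hn' : 1 < lam * n%:R by rewrite -(ltr_pM2l hlam) mulfV ?gt_eqF in hn.
have ha := hpos (i :: xh).
have hb := hpos xh.
have : (1 - lam - 2 * lam * n%:R) * u xh <= 0.
  have hl := hlam; apply: mulr_le0_ge0; [lra | exact: ltW].
lra.
Qed.

End S.

Theorem theorem1p4 (R : realType) (m : nat) (hm : (2 <= m)%N) (beta : R)
  (hb1 : 2^-1 <= beta) (hb2 : beta < 1) (lam : R) :
  is_eigenvalue m beta lam -> ~ is_principal_eigenvalue m beta lam.
Proof.
move=> _ [hlam [u [[_ [hnz [he _]]] hu]]].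
have hb0 : 0 < beta by lra.
have hm0 : (0 < m)%N by apply: leq_trans hm.
have hpos := @all_pos _ _ hm0 _ hb0 hb2 _ _ hu he hnz.
have [h|h] := eqVneq beta 2^-1.
  exact: (@case_half _ _ hm0 _ hb0 hb2 _ _ hu he hlam hpos h).
apply: (@case_gt _ _ hm0 _ hb0 hb2 _ _ he hlam hpos).
by rewrite lt_def h hb1.
Qed.
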